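(* Assume that the reward class $\mathcal F_{\mathcal P}$ is compact under $\|\cdot\|_{\infty,\mathrm{supp}(\pi_0)}$ and that, for every $R\in\mathcal F_{\mathcal P}$, the map $a\mapsto R(x,a)$ is continuous on $S_x$ for $d_0$-a.e. $x\in\mathcal X$. Then for every truth $p\in\mathcal P$ and every $R\in\mathcal F_{\mathcal P}$, \[ \mathcal L_p(R)=\mathcal L_p(R_p)\quad\Longrightarrow\quad R(x,a)=R_p(x,a)\qquad\forall a\in S_x,\quad d_0\text{-a.e. }x. \] In particular, $\mathcal G_p(R)=0$.
   Context: $\mathcal X$ is a context space with context distribution $d_0$; $\mathcal A$ is a separable metric action space; $\pi_0:\mathcal X\to\Delta(\mathcal A)$ is a reference policy and $S_x:=\mathrm{supp}(\pi_0(\cdot\mid x))$ is the topological support; $\|R\|_{\infty,\mathrm{supp}(\pi_0)}$ is the supremum of $|R(x,a)|$ over pairs with $a\in S_x$. $\mathcal P$ is a compact class of truths; each $p\in\mathcal P$ induces a $\pi_0$-centered measurable reward $R_p:\mathcal X\times\mathcal A\to\mathbb R$ (i.e. $\mathbb E_{a\sim\pi_0(\cdot\mid x)}[R_p(x,a)]=0$), and $\mathcal F_{\mathcal P}:=\{R_p:p\in\mathcal P\}$. For a slate $\mathbf a=(a_1,\dots,a_K)$, $K\ge2$, the MNL choice model is $P_R(y=k\mid x,\mathbf a)=e^{R(x,a_k)}/\sum_{\ell=1}^K e^{R(x,a_\ell)}$, and the log-loss is $\ell(\mathbf v,y)=\log\sum_{k=1}^K e^{v_k}-v_y$. The truth-centered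 population loss is $\mathcal L_p(R):=\mathbb E[\ell(\mathbf v_R,Y)]$ where $X\sim d_0$, $\mathbf A=(A_1,\dots,A_K)\sim\pi_0(\cdot\mid X)^{\otimes K}$, $Y\sim P_{R_p}(\cdot\mid X,\mathbf A)$, and $\mathbf v_R=(R(X,A_1),\dots,R(X,A_K))$. For a centered reward $R$, $a_R(x)$ is a measurable selector in $\arg\max_{a\in S_x}R(x,a)$ under a fixed common measurable tie-breaking rule, $a_p:=a_{R_p}$, and the temperature-zero regret is $\mathcal G_p(R):=\mathbb E_{X\sim d_0}[R_p(X,a_p(X))-R_p(X,a_R(X))]$. *)

(* Defs.v *)
From HB Require Import structures.
From mathcomp Require Import all_boot all_order all_algebra.
From mathcomp Require Import all_classical all_reals all_analysis.
Set Implicit Arguments. Unset Strict Implicit. Unset Printing Implicit Defensive.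
Import Order.TTheory GRing.Theory Num.Theory.
Local Open Scope classical_set_scope.
Local Open Scope ring_scope.

Section Defs.
Variable R : realType.

Section Metric.
Variable A : Type.
Variable dA : A -> A -> R.

Definition is_metric : Prop :=
  [/\ forall a, dA a a = 0,
      forall a b, dA a b = dA b a,
      forall a b c, dA a c <= dA a b + dA b c
    & forall a b, dA a b = 0 -> a = b].

Definition mopen (U : set A) : Prop :=
  forall a, U a -> exists2 e : R, 0 < e & forall b, dA a b < e -> U b.

Definition separable_metric : Prop :=
  exists D : set A, countable D /\
    forall a (e : R), 0 < e -> exists2 b, D b & dA a b < e.
End Metric.

Variables (dX : measure_display) (X : measurableType dX).
Variables (dA' : measure_display) (A : measurableType dA').

Definition borel_for (dA : A -> A -> R) : Prop :=
  (@measurable _ A) = <<s mopen dA >>.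

Definition supp (dA : A -> A -> R) (pi0 : X -> set A -> \bar R) (x : X)
  : set A :=
  [set a | forall U : set A, mopen dA U -> U a -> (0 < pi0 x U)%E].

Definition supnorm_supp (S : X -> set A) (Rf Rg : X -> A -> R) : \bar R :=
  ereal_sup [set r | exists x a, S x a /\ r = (`|Rf x a - Rg x a|)%:E].

(* F_P = {R_p | p in P} compact under ||.||_{infty,supp(pi0)}: every element
   has finite norm (F_P lies in the normed space), and F_P is sequentially
   compact (equivalent to compactness for a (pseudo)metric). *)
Definition compact_class (P : Type) (S : X -> set A) (Rof : P -> X -> A -> R)
  : Prop :=
  (forall p, (supnorm_supp S (Rof p) (fun _ _ => 0%R) < +oo)%E) /\
  forall u : nat -> P, exists (phi : nat -> nat) (q : P),
    {homo phi : m n / (m < n)%N >-> (m < n)%N} /\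
    ((fun n => supnorm_supp S (Rof (u (phi n))) (Rof q)) @ \oo --> 0%E).

Definition cont_on_supp (dA : A -> A -> R) (S : set A) (f : A -> R) : Prop :=
  forall a, S a -> forall e : R, 0 < e -> exists2 del : R, 0 < del &
    forall b, S b -> dA a b < del -> `|f a - f b| < e.

Definition mnl_prob (K : nat) (v : 'I_K -> R) (k : 'I_K) : R :=
  expR (v k) / \sum_(l < K) expR (v l).

Definition logloss (K : nat) (v : 'I_K -> R) (y : 'I_K) : R :=
  ln (\sum_(l < K) expR (v l)) - v y.

(* integral of f against the K-fold product mu^{(x)K}, written as an
   iterated integral (Tonelli) *)
Fixpoint prod_integral (mu : set A -> \bar R) (n : nat)
  : (n.-tuple A -> \bar R) -> \bar R :=
  match n return (n.-tuple A -> \bar R) -> \bar R with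
  | 0 => fun f => f [tuple]
  | n'.+1 => fun f =>
      (\int[mu]_a prod_integral mu (fun t : n'.-tuple A => f [tuple of a :: t]))%E
  end.

Definition slate_values (K : nat) (Rf : X -> A -> R) (x : X) (t : K.-tuple A)
  : 'I_K -> R := fun k => Rf x (tnth t k).

(* truth-centered population loss L_p(R) = E[ l(v_R, Y) ],
   X ~ d0, A ~ pi0(.|X)^{(x)K}, Y ~ P_{R_p}(.|X,A) *)
Definition pop_loss (K : nat) (d0 : set X -> \bar R) (pi0 : X -> set A -> \bar R)
  (Rp Rf : X -> A -> R) : \bar R :=
  (\int[d0]_x prod_integral (pi0 x) (fun t : K.-tuple A =>
     (\sum_(k < K) mnl_prob (slate_values Rp x t) k *
                   logloss (slate_values Rf x t) k)%:E))%E.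

Definition argmax_set (S : X -> set A) (Rf : X -> A -> R) (x : X) : set A :=
  [set a | S x a /\ forall b, S x b -> Rf x b <= Rf x a].

(* a_R(x) : selector with a fixed common tie-breaking rule [tie], which picks
   an element of a given argmax set *)
Definition a_sel (S : X -> set A) (tie : X -> set A -> A) (Rf : X -> A -> R)
  : X -> A := fun x => tie x (argmax_set S Rf x).

Definition regret (d0 : set X -> \bar R) (S : X -> set A) (tie : X -> set A -> A)
  (Rp Rf : X -> A -> R) : \bar R :=
  (\int[d0]_x (Rp x (a_sel S tie Rp x) - Rp x (a_sel S tie Rf x))%:E)%E.

End Defs.

Definition kfun (R : realType) (dX dA' : measure_display) (X : measurableType dX)
  (A : measurableType dA') (k : R.-pker X ~> A) : X -> set A -> \bar R :=
  fun x U => k x U.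

(* Main.v *)
Require Import Defs.
From HB Require Import structures.
From mathcomp Require Import all_boot all_order all_algebra.
From mathcomp Require Import all_classical all_reals all_analysis.
From mathcomp Require Import measurable_realfun.
From mathcomp Require Import ring lra.
Import Order.TTheory GRing.Theory Num.Theory.
Local Open Scope classical_set_scope.
Local Open Scope ring_scope.

Section kpull.
Context (R : realType) (dX : measure_display) (X : measurableType dX)
  (dA' : measure_display) (A : measurableType dA').
Context (pi0 : R.-pker X ~> A).
Context dY (Y : measurableType dY) (f : Y -> X).

Definition kpull (mf : measurable_fun setT f) (y : Y) : {measure set A -> \bar R} :=
  pi0 (f y).

Hypothesis mf : measurable_fun setT f.

Let kpull_meas U : measurable U -> measurable_fun setT (kpull mf ^~ U).
Proof. by move=> mU; exact: (measurableT_comp (measurable_kernel pi0 U mU) mf). Qed.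

HB.instance Definition _ := isKernel.Build _ _ _ _ _ (kpull mf) kpull_meas.

Let kpull_prob y : kpull mf y setT = 1%E.
Proof. exact: prob_kernel. Qed.

HB.instance Definition _ := Kernel_isProbability.Build _ _ _ _ _ (kpull mf) kpull_prob.
End kpull.
Arguments kpull {R dX X dA' A} pi0 {dY Y f} mf.

Section Machinery.
Context (R : realType) (dX : measure_display) (X : measurableType dX)
  (dA' : measure_display) (A : measurableType dA').
Context (pi0 : R.-pker X ~> A).

Fixpoint tmR (n : nat) : forall dY (Y : measurableType dY), (Y -> n.-tuple A -> R) -> Prop :=
  match n return forall dY (Y : measurableType dY), (Y -> n.-tuple A -> R) -> Prop with
  | 0 => fun dY Y h => measurable_fun setT (fun y => h y [tuple])
  | n'.+1 => fun dY Y h =>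
      @tmR n' _ (Y * A)%type (fun ya t => h ya.1 [tuple of ya.2 :: t])
  end.
Arguments tmR n {dY Y} h.

Lemma I_ge0 (mu : {measure set A -> \bar R}) n (g : n.-tuple A -> \bar R) :
  (forall t, (0 <= g t)%E) -> (0 <= prod_integral mu g)%E.
Proof.
elim: n g => [|n IH] g g0 /=; first exact: g0.
by apply: integral_ge0 => a _; apply: IH => t; exact: g0.
Qed.

Lemma I_meas n : forall dY (Y : measurableType dY) (f : Y -> X)
  (mf : measurable_fun setT f) (h : Y -> n.-tuple A -> R),
  (forall y t, 0 <= h y t) -> tmR n h ->
  measurable_fun setT (fun y => prod_integral (pi0 (f y)) (fun t => (h y t)%:E)).
Proof.
elim: n => [|n IH] dY Y f mf h h0 th /=.
  exact/measurable_EFinP.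
have mf1 : measurable_fun setT (f \o fst : Y * A -> X).
  exact: measurableT_comp mf measurable_fst.
have := IH _ _ _ mf1 _ (fun ya t => h0 ya.1 _) th.
move=> mk.
have := measurable_fun_integral_finite_kernel _ (kpull pi0 mf) _ mk.
apply.
by move=> [y a]; apply: I_ge0 => t; rewrite lee_fin.
Qed.


Lemma int0_ae d (T : measurableType d) (mu : {measure set T -> \bar R})
  (phi : T -> \bar R) :
  (forall a, (0 <= phi a)%E) -> measurable_fun setT phi ->
  (\int[mu]_a phi a = 0)%E -> {ae mu, forall a, phi a = 0%E}.
Proof.
move=> p0 mp i0.
have : (\int[mu]_(a in setT) `|phi a| = 0)%E.
  by rewrite -i0; apply: eq_integral => a _; rewrite gee0_abs.
move/(ae_eq_integral_abs mu measurableT mp).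
by apply: filterS => a /(_ I).
Qed.

Lemma I_add n : forall dY (Y : measurableType dY) (f : Y -> X)
  (mf : measurable_fun setT f) (h1 h2 : Y -> n.-tuple A -> R),
  (forall y t, 0 <= h1 y t) -> (forall y t, 0 <= h2 y t) ->
  tmR n h1 -> tmR n h2 -> forall y,
  prod_integral (pi0 (f y)) (fun t => (h1 y t + h2 y t)%:E) =
  (prod_integral (pi0 (f y)) (fun t => (h1 y t)%:E) +
   prod_integral (pi0 (f y)) (fun t => (h2 y t)%:E))%E.
Proof.
elim: n => [|n IH] dY Y f mf h1 h2 h10 h20 t1 t2 y /=; first by [].
have mf1 : measurable_fun setT (f \o fst : Y * A -> X).
  exact: measurableT_comp mf measurable_fst.
rewrite -ge0_integralD //.
- apply: eq_integral => a _.
  exact: (IH _ _ _ mf1 (fun ya t => h1 ya.1 [tuple of ya.2 :: t])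
     (fun ya t => h2 ya.1 [tuple of ya.2 :: t]) (fun ya t => h10 ya.1 _)
     (fun ya t => h20 ya.1 _) t1 t2 (y, a)).
- by move=> a _; apply: I_ge0 => t; rewrite lee_fin.
- have M := (measurable_fun_pair2 y (@I_meas n _ _ _ mf1 _ (fun ya t => h10 ya.1 _) t1)).
  exact M.
- by move=> a _; apply: I_ge0 => t; rewrite lee_fin.
- exact: (measurable_fun_pair2 y (@I_meas n _ _ _ mf1 _ (fun ya t => h20 ya.1 _) t2)).
Qed.

Lemma I_le n (c : R) : forall dY (Y : measurableType dY) (f : Y -> X)
  (mf : measurable_fun setT f) (h : Y -> n.-tuple A -> R),
  (forall y t, 0 <= h y t) -> (forall y t, h y t <= c) ->
  tmR n h -> forall y,
  (prod_integral (pi0 (f y)) (fun t => (h y t)%:E) <= c%:E)%E.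
Proof.
elim: n => [|n IH] dY Y f mf h h0 hc th y /=; first by rewrite lee_fin.
have mf1 : measurable_fun setT (f \o fst : Y * A -> X).
  exact: measurableT_comp mf measurable_fst.
apply: (@le_trans _ _ (\int[pi0 (f y)]_(a in setT) (cst c%:E a))%E).
  apply: ge0_le_integral => //.
  - by move=> a _; apply: I_ge0 => t; rewrite lee_fin.
  - exact: (measurable_fun_pair2 y (@I_meas n _ _ _ mf1 _ (fun ya t => h0 ya.1 _) th)).
  - move=> a _.
    exact: (IH _ _ _ mf1 (fun ya t => h ya.1 [tuple of ya.2 :: t])
       (fun ya t => h0 ya.1 _) (fun ya t => hc ya.1 _) th (y, a)).
by rewrite integral_cst // prob_kernel mule1.
Qed.

Lemma I_zero n : forall dY (Y : measurableType dY) (f : Y -> X)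
  (mf : measurable_fun setT f) (h : Y -> n.-tuple A -> R),
  (forall y t, 0 <= h y t) -> tmR n h -> forall y,
  prod_integral (pi0 (f y)) (fun t => (h y t)%:E) = 0%E ->
  exists t, h y t = 0.
Proof.
elim: n => [|n IH] dY Y f mf h h0 th y /=.
  by case=> H; exists [tuple].
move=> i0.
have h0E : forall y t, (0 <= (h y t)%:E)%E by move=> *; rewrite lee_fin.
have mf1 : measurable_fun setT (f \o fst : Y * A -> X).
  exact: measurableT_comp mf measurable_fst.
have pp : (0 < pi0 (f y) setT)%E by rewrite prob_kernel lte01.
have H := @int0_ae _ _ (pi0 (f y)) _ (fun a => I_ge0 _ _ _ (fun t => h0E y [tuple of a :: t]))
  (measurable_fun_pair2 y (@I_meas n _ _ _ mf1 _ (fun ya t => h0 ya.1 _) th)) i0.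
have [a Ha] := @filter_ex _ _ (ae_properfilter_algebraOfSetsType pp) _ H.
have [t Ht] := IH _ _ _ mf1 (fun ya t => h ya.1 [tuple of ya.2 :: t])
   (fun ya t => h0 ya.1 _) th (y, a) Ha.
by exists [tuple of a :: t].
Qed.

Lemma tm_ext n dY (Y : measurableType dY) (h1 h2 : Y -> n.-tuple A -> R) :
  (forall y t, h1 y t = h2 y t) -> tmR n h1 -> tmR n h2.
Proof.
move=> e; have -> // : h2 = h1.
by apply/funext => y; apply/funext => t; rewrite e.
Qed.

Lemma tm_cst n : forall dY (Y : measurableType dY) (c : Y -> R),
  measurable_fun setT c -> tmR n (fun y (_ : n.-tuple A) => c y).
Proof.
elim: n => [|n IH] dY Y c mc //=.
exact: (IH _ _ (c \o fst) (measurableT_comp mc measurable_fst)).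
Qed.

Lemma tm_op2 (op : R -> R -> R)
  (Hop : forall dZ (Z : measurableType dZ) (u v : Z -> R),
     measurable_fun setT u -> measurable_fun setT v ->
     measurable_fun setT (fun z => op (u z) (v z))) n :
  forall dY (Y : measurableType dY) (h1 h2 : Y -> n.-tuple A -> R),
  tmR n h1 -> tmR n h2 -> tmR n (fun y t => op (h1 y t) (h2 y t)).
Proof.
elim: n => [|n IH] dY Y h1 h2 /= t1 t2; first exact: Hop.
exact: (IH _ _ _ _ t1 t2).
Qed.

Lemma tm_op1 (phi : R -> R) (mphi : measurable_fun setT phi) n :
  forall dY (Y : measurableType dY) (h : Y -> n.-tuple A -> R),
  tmR n h -> tmR n (fun y t => phi (h y t)).
Proof.
elim: n => [|n IH] dY Y h /= th; first exact: measurableT_comp mphi th.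
exact: (IH _ _ _ th).
Qed.

Lemma tm_add n dY (Y : measurableType dY) (h1 h2 : Y -> n.-tuple A -> R) :
  tmR n h1 -> tmR n h2 -> tmR n (fun y t => h1 y t + h2 y t).
Proof. apply: (tm_op2 (fun a b => a + b)) => *; exact: measurable_funD. Qed.

Lemma tm_mul n dY (Y : measurableType dY) (h1 h2 : Y -> n.-tuple A -> R) :
  tmR n h1 -> tmR n h2 -> tmR n (fun y t => h1 y t * h2 y t).
Proof. apply: (tm_op2 (fun a b => a * b)) => *; exact: measurable_funM. Qed.

Lemma tm_sub n dY (Y : measurableType dY) (h1 h2 : Y -> n.-tuple A -> R) :
  tmR n h1 -> tmR n h2 -> tmR n (fun y t => h1 y t - h2 y t).
Proof. apply: (tm_op2 (fun a b => a - b)) => *; exact: measurable_funB. Qed.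

Lemma tm_sum n dY (Y : measurableType dY) (I : Type) (s : seq I)
  (F : I -> Y -> n.-tuple A -> R) :
  (forall i, tmR n (F i)) -> tmR n (fun y t => \sum_(i <- s) F i y t).
Proof.
move=> tF; elim: s => [|i s IH].
  apply: (@tm_ext _ _ _ (fun y (_ : n.-tuple A) => (fun _ => 0) y)).
    by move=> y t; rewrite big_nil.
  exact: tm_cst.
apply: (@tm_ext _ _ _ (fun y t => F i y t + \sum_(j <- s) F j y t)).
  by move=> y t; rewrite big_cons.
exact: tm_add.
Qed.

Lemma tm_coord (w : X * A -> R) (mw : measurable_fun setT w) n :
  forall dY (Y : measurableType dY) (f : Y -> X) (mf : measurable_fun setT f)
  (k : 'I_n), tmR n (fun y t => w (f y, tnth t k)).
Proof.
elim: n => [|n IH] dY Y f mf k; first by case: k.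
have mf1 : measurable_fun setT (f \o fst : Y * A -> X).
  exact: measurableT_comp mf measurable_fst.
case: k => -[|k] Hk /=.
  apply: (@tm_ext _ _ _ (fun ya (_ : n.-tuple A) =>
     (fun ya : Y * A => w (f ya.1, ya.2)) ya)).
    by move=> [y a] t /=; rewrite (tnth_nth a) /=.
  apply: tm_cst.
  apply: measurableT_comp mw _.
  exact: measurable_fun_pair mf1 measurable_snd.
have Hk' : (k < n)%N by [].
apply: (@tm_ext _ _ _ (fun ya t => w ((f \o fst) ya, tnth t (Ordinal Hk')))).
  by move=> [y a] t /=; rewrite (tnth_nth a) (tnth_nth a) /=.
exact: IH.
Qed.

End Machinery.

Section Alg.
Context (R : realType) (K : nat).
Implicit Types (vp vq : 'I_K -> R).

Definition Zs (v : 'I_K -> R) : R := \sum_(l < K) expR (v l).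
Definition Fl vp vq : R := \sum_(k < K) mnl_prob vp k * logloss vq k.

Lemma Zs_gt0 v (k0 : 'I_K) : 0 < Zs v.
Proof.
rewrite /Zs (bigD1 k0) //=; apply: ltr_pwDl; first exact: expR_gt0.
by apply: sumr_ge0 => i _; exact: expR_ge0.
Qed.

Lemma Fl_simp vp vq (k0 : 'I_K) :
  Fl vp vq = ln (Zs vq) - (\sum_(k < K) expR (vp k) * vq k) / Zs vp.
Proof.
have Z0 : Zs vp != 0 by rewrite gt_eqF // (Zs_gt0 _ k0).
rewrite /Fl /mnl_prob /logloss -/(Zs vp) -/(Zs vq).
transitivity ((\sum_(k < K) (expR (vp k) * ln (Zs vq) - expR (vp k) * vq k)) / Zs vp).
  by rewrite mulr_suml; apply: eq_bigr => k _; ring.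
rewrite sumrB; rewrite -mulr_suml -/(Zs vp); field.
exact: Z0.
Qed.


Lemma G_prop vp vq (k0 : 'I_K) :
  0 <= Fl vp vq - Fl vp vp /\
  (Fl vp vq - Fl vp vp = 0 -> forall k,
     vq k - vp k = (\sum_(l < K) expR (vp l) * (vq l - vp l)) / Zs vp).
Proof.
have Zp0 : 0 < Zs vp := Zs_gt0 vp k0.
set Zp := Zs vp in Zp0 *.
set m := (\sum_(l < K) expR (vp l) * (vq l - vp l)) / Zp.
pose E := \sum_(k < K) expR (vp k) * (expR (vq k - vp k - m) - 1 - (vq k - vp k - m)).
have E0 : 0 <= E.
  apply: sumr_ge0 => k _; apply: mulr_ge0; first exact: expR_ge0.
  have := expR_ge1Dx (vq k - vp k - m); lra.
have HG : Fl vp vq - Fl vp vp = ln (Zs vq) - ln Zp - m.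
  rewrite !(Fl_simp _ _ k0) -/Zp /m.
  have -> : \sum_(l < K) expR (vp l) * (vq l - vp l) =
    \sum_(l < K) expR (vp l) * vq l - \sum_(l < K) expR (vp l) * vp l.
    by rewrite -sumrB; apply: eq_bigr => k _; rewrite mulrBr.
  field.
  by rewrite gt_eqF.
have HS : \sum_(k < K) expR (vp k) * expR (vq k - vp k - m) = Zp + E.
  rewrite (eq_bigr (fun k => (expR (vp k) + expR (vp k) * (expR (vq k - vp k - m) - 1
      - (vq k - vp k - m))) + (expR (vp k) * (vq k - vp k) - m * expR (vp k)))); last first.
    by move=> k _; ring.
  rewrite big_split big_split /= sumrB -mulr_sumr -/(Zs vp) -/Zp -/E.
  have -> : \sum_(i < K) expR (vp i) * (vq i - vp i) - m * Zp = 0.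
    by rewrite /m; field; rewrite gt_eqF.
  by rewrite addr0.
have HZq : Zs vq = expR m * (Zp + E).
  rewrite -HS mulr_sumr /Zs; apply: eq_bigr => k _.
  by rewrite mulrCA -!expRD; congr expR; ring.
have ZE0 : 0 < Zp + E by lra.
have Hln : ln (Zs vq) = m + ln (Zp + E).
  by rewrite HZq lnM ?posrE ?expR_gt0 // expRK.
rewrite HG Hln.
have HG2 : m + ln (Zp + E) - ln Zp - m = ln (Zp + E) - ln Zp by ring.
rewrite HG2; split.
  by rewrite subr_ge0 ler_ln ?posrE //; lra.
move=> H0.
have HE : Zp + E = Zp.
  apply: ln_inj; rewrite ?posrE //.
  by move/eqP: H0; rewrite subr_eq0 => /eqP.
have E00 : E = 0 by lra.
move=> k.
have := @psumr_eq0P _ _ (fun _ => true) (fun k => expR (vp k) *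
  (expR (vq k - vp k - m) - 1 - (vq k - vp k - m))) _ E00 k isT.
have nn : forall i : 'I_K, true ->
    0 <= expR (vp i) * (expR (vq i - vp i - m) - 1 - (vq i - vp i - m)).
  move=> i _; apply: mulr_ge0; first exact: expR_ge0.
  have := expR_ge1Dx (vq i - vp i - m); lra.
move=> /(_ nn) /eqP; rewrite mulf_eq0 gt_eqF ?expR_gt0 //= => /eqP Hu.
have [u0|u0] := eqVneq (vq k - vp k - m) 0; first lra.
have := expR_gt1Dx u0; lra.
Qed.

Lemma Fpp_ge0 vp : 0 <= Fl vp vp.
Proof.
apply: sumr_ge0 => k _; apply: mulr_ge0.
  by rewrite /mnl_prob divr_ge0 ?expR_ge0 //; apply: sumr_ge0 => *; exact: expR_ge0.
rewrite /logloss subr_ge0 -{1}(expRK (vp k)) ler_ln ?posrE ?expR_gt0 //.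
  by rewrite (bigD1 k) //= lerDl; apply: sumr_ge0 => *; exact: expR_ge0.
by rewrite (Zs_gt0 vp k).
Qed.

Lemma Fpp_le vp : Fl vp vp <= K%:R.
Proof.
rewrite /Fl -[K in K%:R]card_ord -sumr_const.
apply: ler_sum => k _.
have Zp0 : 0 < Zs vp := Zs_gt0 vp k.
rewrite /mnl_prob /logloss -/(Zs vp).
set x := Zs vp * expR (- vp k).
have x0 : 0 < x by rewrite mulr_gt0 // expR_gt0.
have -> : ln (Zs vp) - vp k = ln x.
  by rewrite lnM ?posrE ?expR_gt0 // expRK.
have lx : ln x <= x - 1.
  have := @le_ln1Dx _ (x - 1); rewrite (_ : 1 + (x - 1) = x); last by ring.
  by apply; lra.
have p0 : 0 <= expR (vp k) / Zs vp by rewrite divr_ge0 ?expR_ge0 // ltW.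
apply: (le_trans (ler_wpM2l p0 lx)).
have -> : expR (vp k) / Zs vp * (x - 1) = 1 - expR (vp k) / Zs vp.
  rewrite /x expRN; field; rewrite ?gt_eqF ?expR_gt0 //.
lra.
Qed.
End Alg.

Section Supp.
Context (R : realType) (dA' : measure_display) (A : measurableType dA').
Context (dA : A -> A -> R) (mu : {measure set A -> \bar R}).
Hypotheses (hm : is_metric dA) (hs : separable_metric dA)
  (hb : (@measurable _ A) = <<s mopen dA >>).

Definition ball_ (c : A) (r : R) : set A := [set b | dA c b < r].

Lemma ball_open c r : mopen dA (ball_ c r).
Proof.
case: hm => _ _ htri _.
move=> b /= hb'; exists (r - dA c b); first by rewrite subr_gt0.
move=> b' hb2; rewrite /ball_ /=.
have := htri c b b'; lra.
Qed.

Lemma open_meas U : mopen dA U -> measurable U.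
Proof. by move=> oU; rewrite hb; exact: sub_sigma_algebra. Qed.

Lemma supp_null : exists N, [/\ measurable N, mu N = 0%E &
  forall a, ~ (forall U, mopen dA U -> U a -> (0 < mu U)%E) -> N a].
Proof.
case: hm => h0 hsym htri hsep.
case: hs => D [cD dD].
have [g ginj] := countable_injP D cD.
pose r (m : nat) : R := m.+1%:R^-1.
have r0 : forall m, 0 < r m by move=> m; rewrite /r invr_gt0 ltr0n.
pose F (n m : nat) : set A :=
  match pselect (exists c, [/\ D c, g c = n & mu (ball_ c (r m)) = 0%E]) with
  | left h => ball_ (projT1 (cid h)) (r m)
  | right _ => set0
  end.
have FN : forall n m, mu.-negligible (F n m).
  move=> n m; rewrite /F; case: pselect => [h|_]; last first.
    by exists set0; split => //; exact: measure0.
  case: (cid h) => c [Dc gc mc] /=.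
  by exists (ball_ c (r m)); split => //; exact: open_meas (ball_open _ _).
have : mu.-negligible (\bigcup_n \bigcup_m F n m).
  by apply: negligible_bigcup => n; apply: negligible_bigcup => m; exact: FN.
case=> N [mN N0 sN]; exists N; split => // a na.
apply: sN.
have [U [oU Ua nU]] : exists U, [/\ mopen dA U, U a & ~ (0 < mu U)%E].
  apply: contrapT => H; apply: na => U oU Ua.
  by apply: contrapT => nU; apply: H; exists U.
have mU0 : mu U = 0%E.
  apply/eqP; rewrite eq_le measure_ge0 andbT.
  by rewrite leNgt; apply/negP.
have [e e0 He] := oU a Ua.
have e2 : 0 < e / 2 by rewrite divr_gt0.
have [m hm'] := ltr_add_invr e2; rewrite add0r in hm'.
have [c Dc ac] := dD a (r m) (r0 m).
have sub : ball_ c (r m) `<=` U.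
  move=> b cb; rewrite /ball_ /= in cb; apply: He.
  move: hm' ac cb (htri a c b); rewrite -/(r m); generalize (r m) => q; lra.
have mc : mu (ball_ c (r m)) = 0%E.
  apply/eqP; rewrite eq_le measure_ge0 andbT -mU0.
  by apply: le_measure => //; rewrite inE; [exact: open_meas (ball_open _ _)|exact: open_meas].
exists (g c) => //; exists m => //.
rewrite /F; case: pselect => [h|nh]; last by exfalso; apply: nh; exists c.
case: (cid h) => c' [Dc' gc' _] /=.
have -> : c' = c by apply: ginj; rewrite ?inE.
by rewrite /ball_ /= hsym.
Qed.
End Supp.


Arguments tmR {R dA' A} n {dY Y} h.
Arguments tm_coord {R dX X dA' A} w mw {n dY Y} f mf k.
Arguments tm_ext {R dA' A n dY Y} h1 h2.
Arguments I_meas {R dX X dA' A} pi0 {n dY Y f} mf {h}.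
Arguments I_add {R dX X dA' A} pi0 {n dY Y f} mf {h1 h2}.
Arguments I_le {R dX X dA' A} pi0 {n} c {dY Y f} mf {h}.
Arguments I_zero {R dX X dA' A} pi0 {n dY Y f} mf {h}.
Arguments int0_ae {R d T mu phi}.
Arguments tm_sum {R dA' A n dY Y I} s F.
Arguments tm_op1 {R dA' A} phi mphi {n dY Y h}.
Arguments tm_mul {R dA' A n dY Y h1 h2}.
Arguments tm_sub {R dA' A n dY Y h1 h2}.
Arguments tm_add {R dA' A n dY Y h1 h2}.
Arguments tm_cst {R dA' A n dY Y} c.
Arguments Fl {R K}.
Arguments Zs {R K}.
Arguments Zs_gt0 {R K}.
Arguments G_prop {R K}.
Arguments Fpp_ge0 {R K}.
Arguments Fpp_le {R K}.
Arguments supp_null {R dA' A dA} mu.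
Arguments I_ge0 {R dA' A} mu {n g}.

Lemma tm_Fl (R : realType) (dX : measure_display) (X : measurableType dX)
  (dA' : measure_display) (A : measurableType dA') n
  (w1 w2 : X * A -> R) (mw1 : measurable_fun setT w1)
  (mw2 : measurable_fun setT w2) (k0 : 'I_n) :
  tmR n (fun (x : X) (t : n.-tuple A) =>
    Fl (fun k => w1 (x, tnth t k)) (fun k => w2 (x, tnth t k))).
Proof.
have c1 := fun k => @tm_coord _ _ _ _ _ w1 mw1 n _ X id (@measurable_id _ X setT) k.
have c2 := fun k => @tm_coord _ _ _ _ _ w2 mw2 n _ X id (@measurable_id _ X setT) k.
have Z1 : tmR n (fun (x : X) (t : n.-tuple A) => Zs (fun k => w1 (x, tnth t k))).
  apply: tm_sum => k; apply: tm_op1 (c1 k); exact: measurable_expR.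
have Z2 : tmR n (fun (x : X) (t : n.-tuple A) => Zs (fun k => w2 (x, tnth t k))).
  apply: tm_sum => k; apply: tm_op1 (c2 k); exact: measurable_expR.
apply: (tm_ext (fun x t => \sum_(k < n)
   expR (w1 (x, tnth t k) - ln (Zs (fun k => w1 (x, tnth t k)))) *
   (ln (Zs (fun k => w2 (x, tnth t k))) - w2 (x, tnth t k))) _).
  move=> x t; rewrite /Fl; apply: eq_bigr => k _.
  rewrite /mnl_prob /logloss expRD expRN lnK //.
  by rewrite posrE; exact: Zs_gt0.
apply: tm_sum => k; apply: tm_mul.
  apply: tm_op1; first exact: measurable_expR.
  apply: tm_sub; first exact: c1.
  by apply: tm_op1 Z1; exact: measurable_ln.
apply: tm_sub; last exact: c2.
by apply: tm_op1 Z2; exact: measurable_ln.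
Qed.

Arguments tm_Fl {R dX X dA' A n w1 w2}.

Lemma tri_false (R : realType) (a b d : R) :
  0 < d -> a < d / 4 -> b < d / 4 -> d <= a + b -> False.
Proof. lra. Qed.

Theorem lemma2 (R : realType)
  (dX : measure_display) (X : measurableType dX)
  (dA' : measure_display) (A : measurableType dA')
  (dA : A -> A -> R)
  (d0 : probability X R)
  (pi0 : R.-pker X ~> A)
  (K : nat)
  (P : Type) (Rof : P -> X -> A -> R)
  (tie : X -> set A -> A) :
  is_metric dA -> separable_metric dA -> borel_for dA ->
  (2 <= K)%N ->
  (* each R_p is measurable and pi0-centered *)
  (forall p, measurable_fun setT (fun xa : X * A => Rof p xa.1 xa.2)) ->
  (forall p x, (pi0 x).-integrable setT (fun a => (Rof p x a)%:E)) ->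
  (forall p x, (\int[pi0 x]_a (Rof p x a)%:E = 0)%E) ->
  (* a_R is a measurable selector of argmax_{S_x} R(x,.) *)
  (forall p, measurable_fun setT (a_sel (supp dA (kfun pi0)) tie (Rof p))) ->
  (forall p, {ae d0, forall x, argmax_set (supp dA (kfun pi0)) (Rof p) x
                                (a_sel (supp dA (kfun pi0)) tie (Rof p) x)}) ->
  (* assumptions of the lemma *)
  compact_class (supp dA (kfun pi0)) Rof ->
  (forall q, {ae d0, forall x,
     cont_on_supp dA (supp dA (kfun pi0) x) (Rof q x)}) ->
  forall p q : P,
    pop_loss K d0 (kfun pi0) (Rof p) (Rof q) = pop_loss K d0 (kfun pi0) (Rof p) (Rof p) ->
    {ae d0, forall x, forall a, supp dA (kfun pi0) x a -> Rof q x a = Rof p x a} /\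
    regret d0 (supp dA (kfun pi0)) tie (Rof p) (Rof q) = 0%E.
Proof.
move=> hm hs hb hK Rm Rint Rc Hselm _ _ Hcont p q.
move=> Hloss.
have [K' eK] : exists K', K = K'.+2.
  by move: hK; case: K {Hloss} => [|[|K']] // _; exists K'.
subst K.
pose k0 : 'I_K'.+2 := ord0.
pose w (r : P) := fun xa : X * A => Rof r xa.1 xa.2.
have mw : forall r, measurable_fun setT (w r) := Rm.
pose vp := fun (x : X) (t : K'.+2.-tuple A) => (fun k => w p (x, tnth t k)).
pose vq := fun (x : X) (t : K'.+2.-tuple A) => (fun k => w q (x, tnth t k)).
pose h1 := fun x t => Fl (vp x t) (vp x t).
pose h2 := fun x t => Fl (vp x t) (vq x t) - h1 x t.
have h10 : forall x t, 0 <= h1 x t := fun x t => Fpp_ge0 _.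
have h20 : forall x t, 0 <= h2 x t := fun x t => (G_prop _ _ k0).1.
have t1 : tmR K'.+2 h1 := tm_Fl (mw p) (mw p) k0.
have t2 : tmR K'.+2 h2 := tm_sub (tm_Fl (mw p) (mw q) k0) t1.
have mid : measurable_fun setT (@id X) := @measurable_id _ X setT.
have Ih0 : forall h : X -> K'.+2.-tuple A -> R, (forall x t, 0 <= h x t) ->
    forall x, (0 <= prod_integral (pi0 (id x)) (fun t => (h x t)%:E))%E.
  by move=> h h0 x; apply: I_ge0 => t; rewrite lee_fin.
have E1 : pop_loss K'.+2 d0 (kfun pi0) (Rof p) (Rof q) =
   (\int[d0]_x prod_integral (pi0 (id x)) (fun t => (h1 x t)%:E) +
    \int[d0]_x prod_integral (pi0 (id x)) (fun t => (h2 x t)%:E))%E.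
  rewrite -ge0_integralD; last 5 first.
  - exact: measurableT.
  - by move=> x _; exact: Ih0.
  - exact: (I_meas pi0 mid h10 t1).
  - by move=> x _; exact: Ih0.
  - exact: (I_meas pi0 mid h20 t2).
  rewrite /pop_loss; apply: eq_integral => x _.
  rewrite -(I_add pi0 mid h10 h20 t1 t2 x).
  congr prod_integral; apply/funext => t; congr EFin.
  by rewrite /h2 addrC subrK.
have E2 : pop_loss K'.+2 d0 (kfun pi0) (Rof p) (Rof p) =
   (\int[d0]_x prod_integral (pi0 (id x)) (fun t => (h1 x t)%:E))%E.
  by rewrite /pop_loss; apply: eq_integral => x _.
rewrite E1 E2 in Hloss.
set LA := (\int[d0]_x prod_integral (pi0 (id x)) (fun t => (h1 x t)%:E))%E in Hloss.
set LB := (\int[d0]_x prod_integral (pi0 (id x)) (fun t => (h2 x t)%:E))%E in Hloss.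
have a0 : (0 <= LA)%E by apply: integral_ge0 => x _; exact: Ih0.
have aK : (LA <= (K'.+2)%:R%:E)%E.
  apply: (@le_trans _ _ (\int[d0]_x (cst (K'.+2)%:R%:E x))%E).
    apply: ge0_le_integral.
    - exact: measurableT.
    - by move=> x _; exact: Ih0.
    - exact: (I_meas pi0 mid h10 t1).
    - exact: measurable_cst.
    - by move=> x _; exact: (I_le pi0 _ mid h10 (fun x t => Fpp_le _) t1 x).
  rewrite integral_cst; last exact: measurableT.
  have H1 : forall z : \bar R, z = 1%E -> ((K'.+2)%:R%:E * z <= (K'.+2)%:R%:E)%E.
    by move=> z ->; rewrite mule1.
  by apply: H1; exact: probability_setT.
have afin : LA \is a fin_num.
  rewrite ge0_fin_numE; last exact: a0.
  exact: le_lt_trans aK (ltry _).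
have key : forall x y : \bar R, x \is a fin_num -> (x + y = x)%E -> y = 0%E.
  by move=> x y fx H; rewrite -(addeK y fx) (addeC y x) H subee.
have b0 : LB = 0%E := key LA LB afin Hloss.
have hb0 : {ae d0, forall x, prod_integral (pi0 (id x)) (fun t => (h2 x t)%:E) = 0%E}.
  exact: (int0_ae (Ih0 _ h20) (I_meas pi0 mid h20 t2) b0).
have step1 : {ae d0, forall x, {ae pi0 x, forall a, Rof q x a = Rof p x a}}.
  apply: filterS hb0 => x Hx.
  have mf1 : measurable_fun setT (fst : X * A -> X) := measurable_fst.
  have mf2 : measurable_fun setT (fst \o fst : X * A * A -> X).
    exact: measurableT_comp measurable_fst measurable_fst.
  pose g1 := fun (ya : X * A) (t : K'.+1.-tuple A) => h2 ya.1 [tuple of ya.2 :: t].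
  pose g2 := fun (yaa : X * A * A) (t : K'.-tuple A) =>
    h2 yaa.1.1 [tuple of yaa.1.2 :: [tuple of yaa.2 :: t]].
  have g10 : forall y t, 0 <= g1 y t := fun y t => h20 _ _.
  have g20 : forall y t, 0 <= g2 y t := fun y t => h20 _ _.
  have g1E : forall y t, (0 <= (g1 y t)%:E)%E by move=> y t; rewrite lee_fin.
  have g2E : forall y t, (0 <= (g2 y t)%:E)%E by move=> y t; rewrite lee_fin.
  have tg1 : tmR K'.+1 g1 := t2.
  have tg2 : tmR K' g2 := t2.
  have pp : (0 < pi0 x setT)%E by rewrite prob_kernel lte01.
  have PF := ae_properfilter_algebraOfSetsType pp.
  have H1 := @int0_ae _ _ _ (pi0 x)
    (fun a1 => prod_integral (pi0 (fst (x, a1))) (fun t => (g1 (x, a1) t)%:E))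
    (fun a1 => I_ge0 _ (fun t => g1E (x, a1) t))
    (measurable_fun_pair2 x (I_meas pi0 mf1 g10 tg1)) Hx.
  have [a1 Ha1] := @filter_ex _ _ PF _ H1.
  have H2 := @int0_ae _ _ _ (pi0 x)
    (fun a2 => prod_integral (pi0 ((fst \o fst) ((x, a1), a2)))
        (fun t => (g2 ((x, a1), a2) t)%:E))
    (fun a2 => I_ge0 _ (fun t => g2E ((x, a1), a2) t))
    (measurable_fun_pair2 (x, a1) (I_meas pi0 mf2 g20 tg2)) Ha1.
  pose c := Rof q x a1 - Rof p x a1.
  have Hc : {ae pi0 x, forall a, Rof q x a - Rof p x a = c}.
    apply: filterS H2 => a2 Ha2.
    have [t Ht] := I_zero pi0 mf2 g20 tg2 ((x, a1), a2) Ha2.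
    pose T : K'.+2.-tuple A := [tuple of a1 :: [tuple of a2 :: t]].
    have HT : h2 x T = 0 := Ht.
    have Hk := (G_prop (vp x T) (vq x T) k0).2 HT.
    have e0 := Hk ord0.
    have e1 := Hk (Ordinal (isT : (1 < K'.+2)%N)).
    rewrite /vp /vq /w /= !(tnth_nth a1) /= in e0 e1.
    by rewrite e1 -e0.
  have Dmeas : measurable_fun setT (fun a => (Rof q x a)%:E - (Rof p x a)%:E)%E.
    by apply: emeasurable_funB; apply/measurable_EFinP;
      exact: (measurable_fun_pair2 x (Rm _)).
  have Iq : (\int[pi0 x]_a ((Rof q x a)%:E - (Rof p x a)%:E) = 0)%E.
    rewrite integralB_EFin; [|exact: measurableT|exact: Rint|exact: Rint].
    by rewrite !Rc sube0.
  have Ic : (\int[pi0 x]_a ((Rof q x a)%:E - (Rof p x a)%:E) = c%:E)%E.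
    rewrite (ae_eq_integral (cst c%:E)); last 4 first.
    - exact: measurableT.
    - exact: Dmeas.
    - exact: measurable_cst.
    - by apply: filterS Hc => z Hz _; rewrite -EFinB Hz.
    rewrite integral_cst; last exact: measurableT.
    have H3 : forall z : \bar R, z = 1%E -> (c%:E * z = c%:E)%E.
      by move=> z ->; rewrite mule1.
    by apply: H3; exact: prob_kernel.
  have c0 : c = 0.
    have : c%:E = 0%E by rewrite -Ic Iq.
    by case.
  apply: filterS Hc => z Hz.
  by apply/eqP; rewrite -subr_eq0 Hz c0.
have step2 : {ae d0, forall x, forall a, supp dA (kfun pi0) x a -> Rof q x a = Rof p x a}.
  apply: filterS2 (filterI (Hcont q) (Hcont p)) step1 => x [cq cp] Hx z Sz.
  case: Hx => N1 [mN1 N10 sN1].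
  have [N2 [mN2 N20 sN2]] := supp_null (pi0 x) hm hs hb.
  apply: contrapT => neq.
  pose del0 := `|Rof q x z - Rof p x z|.
  have dpos : 0 < del0 by rewrite normr_gt0 subr_eq0; apply/eqP.
  have e0 : 0 < del0 / 4 by rewrite divr_gt0.
  have [d1 d10 Hd1] := cq z Sz (del0 / 4) e0.
  have [d2 d20 Hd2] := cp z Sz (del0 / 4) e0.
  pose del := Num.min d1 d2.
  have delp : 0 < del by rewrite lt_min d10 d20.
  pose B := @ball_ _ _ _ dA z del.
  have oB : mopen dA B := @ball_open _ _ _ dA hm z del.
  have mB : measurable B := @open_meas _ _ _ dA hb B oB.
  have Bz : B z by rewrite /B /ball_ /=; case: hm => -> _ _ _.
  have ballpos : (0 < pi0 x B)%E := Sz B oB Bz.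
  have [b [bb n1 n2]] : exists b, [/\ B b, ~ N1 b & ~ N2 b].
    apply: contrapT => nb.
    have subB : B `<=` N1 `|` N2.
      move=> y yb; apply: contrapT => nu; apply: nb; exists y; split => //.
      - by move=> H; apply: nu; left.
      - by move=> H; apply: nu; right.
    have : (pi0 x B <= pi0 x N1 + pi0 x N2)%E.
      apply: le_trans (measureU2 _ mN1 mN2).
      apply: le_measure; [by rewrite inE|rewrite inE; exact: measurableU|exact: subB].
    rewrite N10 N20 adde0 => le0.
    by move: (lt_le_trans ballpos le0); rewrite ltxx.
  have Sb : supp dA (kfun pi0) x b.
    by apply: contrapT => nS; apply: n2; exact: sN2.
  have eb : Rof q x b = Rof p x b.
    by apply: contrapT => ne; apply: n1; exact: sN1.
  have /andP [b1 b2] : (dA z b < d1) && (dA z b < d2) by rewrite -lt_min.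
  have q1 := Hd1 b Sb b1.
  have p1 := Hd2 b Sb b2.
  have id : Rof q x z - Rof p x z =
      (Rof q x z - Rof q x b) - (Rof p x z - Rof p x b) by rewrite eb; ring.
  have := ler_normB (Rof q x z - Rof q x b) (Rof p x z - Rof p x b).
  rewrite -id -/del0 => tri.
  exact: (tri_false _ _ _ _ dpos q1 p1 tri).
split; first exact: step2.
rewrite /regret.
have ms : forall r, measurable_fun setT
    (fun x => Rof p x (a_sel (supp dA (kfun pi0)) tie (Rof r) x)).
  move=> r.
  exact: (measurableT_comp (Rm p)
    (measurable_fun_pair (@measurable_id _ X setT) (Hselm r))).
rewrite (ae_eq_integral (cst 0%E)); last 4 first.
- exact: measurableT.
- by apply/measurable_EFinP; exact: measurable_funB (ms p) (ms q).
- exact: measurable_cst.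
- apply: filterS step2 => x Hx _.
  rewrite /a_sel.
  have -> : argmax_set (supp dA (kfun pi0)) (Rof q) x =
            argmax_set (supp dA (kfun pi0)) (Rof p) x.
    rewrite /argmax_set; apply/seteqP; split => y [Sy Hy]; split => // y' Sy'.
      by rewrite -(Hx _ Sy) -(Hx _ Sy'); exact: Hy.
    by rewrite (Hx _ Sy) (Hx _ Sy'); exact: Hy.
  by rewrite subrr.
by rewrite integral0.
Qed.
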